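(* Let $A$ be a quasi-ring, $M$ a right module over $A$ and $N$ a submodule of $M$. Put $[M,N]=\{a\in A : M\cdot a\subset N\}$ and, for $m\in M$, $E_m=\{r\in M : m+r\in N\}$. Define a relation $R$ on $M$ by: $m\,R\,n$ if and only if $(m+N)\cap(n+N)\neq\emptyset$ and $E_{ma}=E_{na}$ for every $a\in[M,N]$. Then $R$ is an equivalence relation on $M$ which is compatible with the addition of $M$ and with the external multiplication by elements of $A$. Consequently the quotient set $M/N:=M/R$ inherits a structure of right $A$-module.
   Context: A semiring is a set with two operations $+,\cdot$ such that $(A,+)$ is a commutative monoid with neutral element $0$, $(A,\cdot)$ is a monoid with unit $1$, multiplication distributes over addition, and $0$ is absorbing. An element $x$ of a commutative monoid $(G,+)$ is quasi-invertible if there is $y$ with $x+y+x=x$ and $y+x+y=y$. A quasi-ring is a semiring whose unit $1$ is quasi-invertible for addition. A right module over a quasi-ring $A$ is a commutative monoid $(M,+)$ with an external law $M\times A\to M$, $(m,a)\mapsto m\cdot a$, satisfying $(m\cdot a)\cdot b=m\cdot(ab)$, $m\cdot(a+b)=m\cdot a+m\cdot b$, $(m+n)\cdot a=m\cdot a+n\cdot a$, $m\cdot 1=m$. A submodule is a subset containing $0$ stable under addition and external multiplication. *)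

(* Defs.v *)
From HB Require Import structures.
From mathcomp Require Import all_boot all_order all_algebra.
Set Implicit Arguments. Unset Strict Implicit. Unset Printing Implicit Defensive.
Import GRing.Theory.
Local Open Scope ring_scope.

(* A semiring in the sense of the paper is exactly a [pzSemiRingType]
   (commutative additive monoid, multiplicative monoid, distributivity,
   0 absorbing; no nontriviality assumption). *)

Definition quasi_invertible (G : Type) (add : G -> G -> G) (x : G) : Prop :=
  exists y, add (add x y) x = x /\ add (add y x) y = y.

Definition quasi_ring (A : pzSemiRingType) : Prop :=
  quasi_invertible (@GRing.add A) 1.

Definition comm_monoid (G : Type) (z : G) (add : G -> G -> G) : Prop :=
  [/\ forall x y w, add x (add y w) = add (add x y) w,
      forall x y, add x y = add y x
    & forall x, add z x = x].

Definition right_action (A : pzSemiRingType) (M : Type)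
    (add : M -> M -> M) (act : M -> A -> M) : Prop :=
  [/\ forall m a b, act (act m a) b = act m (a * b),
      forall m a b, act m (a + b) = add (act m a) (act m b),
      forall m n a, act (add m n) a = add (act m a) (act n a)
    & forall m, act m 1 = m].

Definition right_module (A : pzSemiRingType) (M : Type) (z : M)
    (add : M -> M -> M) (act : M -> A -> M) : Prop :=
  comm_monoid z add /\ right_action add act.

Definition submodule (A : pzSemiRingType) (M : nmodType)
    (act : M -> A -> M) (N : M -> Prop) : Prop :=
  [/\ N 0,
      forall x y, N x -> N y -> N (x + y)
    & forall x a, N x -> N (act x a)].

Definition colon (A : pzSemiRingType) (M : nmodType)
    (act : M -> A -> M) (N : M -> Prop) : A -> Prop :=
  fun a => forall m, N (act m a).

Definition Eset (M : nmodType) (N : M -> Prop) (m : M) : M -> Prop :=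
  fun r => N (m + r).

Definition Rrel (A : pzSemiRingType) (M : nmodType)
    (act : M -> A -> M) (N : M -> Prop) (m n : M) : Prop :=
  (exists x, (exists u, N u /\ x = m + u) /\ (exists v, N v /\ x = n + v))
  /\ (forall a, colon act N a ->
        forall r, Eset N (act m a) r <-> Eset N (act n a) r).

(* Main.v *)
Require Import Defs.
From HB Require Import structures.
From mathcomp Require Import all_boot all_order all_algebra.
From Stdlib Require Import ClassicalEpsilon ProofIrrelevance FunctionalExtensionality PropExtensionality.
Import GRing.Theory.
Local Open Scope ring_scope.

Section S.
Variables (A : pzSemiRingType) (M : nmodType) (act : M -> A -> M) (N : M -> Prop).
Hypothesis Hact : right_action (@GRing.add M) act.
Hypothesis HN : submodule act N.
Local Notation R := (Rrel act N).

Lemma Rrefl m : R m m.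
Proof. split; last by []. exists m; split; exists 0; (split; [by case: HN | by rewrite addr0]). Qed.

Lemma Rsym m n : R m n -> R n m.
Proof.
case=> [[x [[u [Nu ->]] [v [Nv Ex]]]] E]; split.
  by exists (n + v); split; [exists v | exists u].
by move=> a Ha r; apply: iff_sym; apply: E.
Qed.

Lemma Rtrans m n p : R m n -> R n p -> R m p.
Proof.
case: HN => N0 ND NA.
case=> [[x [[u [Nu ->]] [v [Nv Ex]]]] E1] [[y [[v' [Nv' ->]] [w [Nw Ey]]]] E2].
split; last by move=> a Ha r; exact: (iff_trans (E1 a Ha r) (E2 a Ha r)).
exists (m + (u + v')); split; first by exists (u + v'); split => //; apply: ND.
exists (w + v); split; first by apply: ND.
by rewrite addrA Ex [in RHS]addrA -Ey -!addrA (addrC v).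
Qed.

Lemma Radd m m' n n' : R m n -> R m' n' -> R (m + m') (n + n').
Proof.
case: HN => N0 ND NA; case: Hact => aA aD aDm a1.
case=> [[x [[u [Nu ->]] [v [Nv Ex]]]] E1] [[y [[u' [Nu' ->]] [v' [Nv' Ey]]]] E2].
split.
  exists (m + m' + (u + u')); split; first by exists (u + u'); split => //; apply: ND.
  exists (v + v'); split; first by apply: ND.
  by rewrite addrACA Ex Ey addrACA.
move=> a Ha r; rewrite /Eset !aDm -!addrA.
apply: iff_trans (E1 a Ha (act m' a + r)) _.
rewrite /Eset addrA (addrC (act n a)) -addrA.
apply: iff_trans (E2 a Ha (act n a + r)) _.
by rewrite /Eset addrA (addrC (act n' a)) -addrA.
Qed.

Lemma Ract m n a : R m n -> R (act m a) (act n a).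
Proof.
case: HN => N0 ND NA; case: Hact => aA aD aDm a1.
case=> [[x [[u [Nu ->]] [v [Nv Ex]]]] E1].
split.
  exists (act (m + u) a); split; first by exists (act u a); split; [apply: NA | rewrite aDm].
  by exists (act v a); split; [apply: NA | rewrite Ex aDm].
move=> b Hb r; rewrite /Eset !aA; apply: E1 => m'; rewrite -aA; apply: Hb.
Qed.
End S.

Theorem proposition2p1 (A : pzSemiRingType) (M : nmodType)
    (act : M -> A -> M) (N : M -> Prop) :
  quasi_ring A ->
  right_action (@GRing.add M) act ->
  submodule act N ->
  let R := Rrel act N in
  (* R is an equivalence relation *)
  ((forall m, R m m) /\
   (forall m n, R m n -> R n m) /\
   (forall m n p, R m n -> R n p -> R m p)) /\
  (* compatible with addition *)
  (forall m m' n n', R m n -> R m' n' -> R (m + m') (n + n')) /\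
  (* compatible with external multiplication *)
  (forall m n a, R m n -> R (act m a) (act n a)) /\
  (* hence the quotient set M/R inherits a right A-module structure *)
  (exists (Q : Type) (z : Q) (add : Q -> Q -> Q) (qact : Q -> A -> Q)
          (pi : M -> Q),
     (forall q, exists m, pi m = q) /\
     (forall m n, pi m = pi n <-> R m n) /\
     right_module z add qact /\
     pi 0 = z /\
     (forall m n, pi (m + n) = add (pi m) (pi n)) /\
     (forall m a, pi (act m a) = qact (pi m) a)).
Proof.
move=> _ Hact HN R.
have Rr := @Rrefl _ _ act N; have Rs := @Rsym _ _ act N; have Rt := @Rtrans _ _ act N HN.
have Ra := @Radd _ _ act N Hact HN; have Rx := @Ract _ _ act N Hact HN.
split; first by split; [exact: Rr | split; [exact: Rs | exact: Rt]].
split; first exact: Ra.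
split; first exact: Rx.
pose Q := {P : M -> Prop | exists m, P = R m}.
pose pi (m : M) : Q := exist _ (R m) (ex_intro _ m erefl).
pose rep (q : Q) : M := proj1_sig (constructive_indefinite_description _ (proj2_sig q)).
have piK q : pi (rep q) = q.
  rewrite /rep; case: (constructive_indefinite_description _ _) => m Hm /=.
  case: q Hm => P HP /= Hm; subst P; apply: eq_sig_hprop => //= *; apply: proof_irrelevance.
have pieq m n : pi m = pi n <-> R m n.
  split.
    move=> H; have : proj1_sig (pi m) = proj1_sig (pi n) by rewrite H.
    by move=> /= ->; apply: Rr.
  move=> H; apply: eq_sig_hprop => /=; first by move=> *; apply: proof_irrelevance.
  apply: functional_extensionality => p; apply: propositional_extensionality.
  by split => Hp; [apply: Rt (Rs _ _ H) Hp | apply: Rt H Hp].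
have repR m : R (rep (pi m)) m by apply/pieq; rewrite piK.
pose add (q q' : Q) := pi (rep q + rep q').
pose qact (q : Q) a := pi (act (rep q) a).
have padd m n : pi (m + n) = add (pi m) (pi n).
  by apply/pieq; apply: Rs; apply: Ra; apply: repR.
have pact m a : pi (act m a) = qact (pi m) a.
  by apply/pieq; apply: Rs; apply: Rx; apply: repR.
case: Hact => aA aD aDm a1.
exists Q, (pi 0), add, qact, pi; split; first by move=> q; exists (rep q).
split; first exact: pieq.
split; last by [].
split.
  split.
  - by move=> x y w; rewrite -(piK x) -(piK y) -(piK w) -!padd addrA.
  - by move=> x y; rewrite -(piK x) -(piK y) -!padd addrC.
  - by move=> x; rewrite -(piK x) -!padd add0r.
split.
- by move=> x a b; rewrite -(piK x) -!pact aA.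
- by move=> x a b; rewrite -(piK x) -!pact -padd aD.
- by move=> x y a; rewrite -(piK x) -(piK y) -padd -!pact aDm padd.
- by move=> x; rewrite -(piK x) -pact a1.
Qed.
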